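(* Consider the reputation-based proportional-share reverse auction with ex-post payments described in the context, with budget $B>0$, worker set $U$, arbitrary bids $b_i\ge 0$, reputations $Re_i\in(0,1]$ and internal reputations $re_i\in[0,1]$. Then the total payment does not exceed the budget: $\sum_{i\in U}p_i=\sum_{i\in S}p_i\le B$.
   Context: Setting. A task publisher with budget $B>0$ faces a finite set $U$ of workers. Each worker $i\in U$ has a public accumulated reputation $Re_i\in(0,1]$ and submits a sealed bid $b_i\ge 0$. After the task, each selected worker $i$ receives an internal reputation $re_i\in[0,1]$. Mechanism. (1) Sort the workers so that $\frac{b_1}{Re_1}\le\dots\le\frac{b_{|U|}}{Re_{|U|}}$ (ties broken arbitrarily). (2) Starting with $S=\emptyset$ and $i=1$, while $i\le|U|$ and $\frac{b_i}{Re_i}\le \frac{B}{Re_i+\sum_{j\in S}Re_j}$, set $S=S\cup\{i\}$ and $i=i+1$. Let $k=|S|$. (3) Define $\rho^*=\min\left(\frac{b_{k+1}}{Re_{k+1}},\frac{B}{\sum_{j\in S}Re_j}\right)$ (with $\frac{b_{k+1}}{Re_{k+1}}:=+\infty$ if $k=|U|$). (4) Every $i\notin S$ is paid $p_i=0$; every $i\in S$ has $p_i^{up}=Re_i\rho^*$. (5) After the task, each $i\in S$ gets $p_i'=\max\left(\frac{B\, re_i}{\sum_{j\in S}re_j},\ \rho^* re_i\right)$ and final payment $p_i=\min(p_i^{up},p_i')$. *)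

(* Defs.v *)
(* Workers are indexed 0..n-1 in the sorted order of step (1). *)
From HB Require Import structures.
From mathcomp Require Import all_boot all_order all_algebra.
Set Implicit Arguments. Unset Strict Implicit. Unset Printing Implicit Defensive.
Import Order.TTheory GRing.Theory Num.Theory.
Local Open Scope ring_scope.

Section Mechanism.
Variables (R : realFieldType) (n : nat) (B : R) (b Re re : nat -> R).

(* Acceptance test of step (2) for worker i, given S = {0,...,i-1}. *)
Definition accept (i : nat) : bool :=
  b i / Re i <= B / (Re i + \sum_(j < i) Re j).

(* k = |S|: the loop stops at the first index failing the test (or at n). *)
Definition nwin : nat := find (fun i => ~~ accept i) (iota 0 n).

Definition sumReS : R := \sum_(j < nwin) Re j.
Definition sumreS : R := \sum_(j < nwin) re j.

Definition rho_star : R :=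
  if (nwin < n)%N then Num.min (b nwin / Re nwin) (B / sumReS) else B / sumReS.

Definition p_up (i : nat) : R := Re i * rho_star.
Definition p_post (i : nat) : R :=
  Num.max (B * re i / sumreS) (rho_star * re i).

Definition payment (i : nat) : R :=
  if (i < nwin)%N then Num.min (p_up i) (p_post i) else 0.

End Mechanism.

(* Main.v *)
Require Import Defs.
From HB Require Import structures.
From mathcomp Require Import all_boot all_order all_algebra.
Import Order.TTheory GRing.Theory Num.Theory.
Local Open Scope ring_scope.

Theorem theorem2 (R : realFieldType) (n : nat) (B : R) (b Re re : nat -> R) :
  0 < B ->
  (forall i, (i < n)%N -> 0 <= b i) ->
  (forall i, (i < n)%N -> 0 < Re i <= 1) ->
  (forall i, (i < n)%N -> 0 <= re i <= 1) ->
  (forall i j, (i <= j)%N -> (j < n)%N -> b i / Re i <= b j / Re j) ->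
  \sum_(i < n) payment n B b Re re i
    = \sum_(i < nwin n B b Re) payment n B b Re re i
  /\ \sum_(i < nwin n B b Re) payment n B b Re re i <= B.
Proof.
move=> hB hb hRe hre hmono.
set k := nwin n B b Re.
have hk : (k <= n)%N.
  by rewrite /k /nwin; have := find_size (fun i => ~~ accept B b Re i) (iota 0 n); rewrite size_iota.
split.
  rewrite -!(big_mkord xpredT) (big_cat_nat (leq0n k) hk) /=.
  have -> : \sum_(k <= i < n) payment n B b Re re i = 0.
    rewrite big_nat_cond big1 // => i /andP[/andP[hi _] _].
    by rewrite /payment -/k ltnNge hi.
  by rewrite addr0.
have hrho : rho_star n B b Re <= B / sumReS n B b Re.
  rewrite /rho_star; case: ifP => _ //; by rewrite ge_min lexx orbT.
have hS : 0 <= sumReS n B b Re.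
  rewrite /sumReS sumr_ge0 // => i _.
  have /andP[h _] := hRe i (leq_trans (ltn_ord i) hk); exact: ltW.
set S := sumReS n B b Re.
set rho := rho_star n B b Re.
have h1 : \sum_(i < k) payment n B b Re re i <= \sum_(i < k) Re i * rho.
  apply: ler_sum => i _; rewrite /payment -/k ltn_ord; by rewrite ge_min lexx.
have h2 : \sum_(i < k) Re i * rho = S * rho by rewrite -mulr_suml.
have h3 : S * rho <= B.
  have [->|hne] := eqVneq S 0; first by rewrite mul0r ltW.
  have h4 : S * rho <= S * (B / S) by rewrite -subr_ge0 -mulrBr mulr_ge0 // subr_ge0.
  by rewrite mulrCA divff // mulr1 in h4.
by rewrite (le_trans h1) // h2.
Qed.
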